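(* Let $A,B$ be an LR pair on $V$. Then there exists a unique $\mathbb F$-algebra antiautomorphism $\dagger$ of $\mathrm{End}(V)$ such that $A^\dagger=B$ and $B^\dagger=A$. Moreover $(X^\dagger)^\dagger=X$ for all $X\in\mathrm{End}(V)$.
   Context: Let $V$ be a vector space over a field $\mathbb F$ with $\dim V=d+1$. A decomposition of $V$ is a sequence $(V_i)_{i=0}^d$ of one-dimensional subspaces with $V=\bigoplus_{i=0}^d V_i$. An element $X\in\mathrm{End}(V)$ lowers the decomposition if $XV_i=V_{i-1}$ for $1\le i\le d$ and $XV_0=0$; it raises it if $XV_i=V_{i+1}$ for $0\le i\le d-1$ and $XV_d=0$. An ordered pair $A,B\in\mathrm{End}(V)$ is an LR pair on $V$ if some decomposition of $V$ is lowered by $A$ and raised by $B$. An antiautomorphism of $\mathrm{End}(V)$ is an $\mathbb F$-linear bijection $\sigma$ with $(XY)^\sigma=Y^\sigma X^\sigma$. *)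

(* Defs.v *)
(* V an abstract finite-dimensional vector space (vectType),
   End(V) = 'End(V) with composition (f \o g)%VF. *)
From HB Require Import structures.
From mathcomp Require Import all_boot all_order all_algebra.
Set Implicit Arguments. Unset Strict Implicit. Unset Printing Implicit Defensive.
Import GRing.Theory.
Local Open Scope ring_scope.

(* A decomposition (V_i)_{i=0}^d of V (dim V = d+1): one-dimensional subspaces
   whose sum is direct and equal to V.  Only indices 0..d are used. *)
Definition decomposition (F : fieldType) (V : vectType F) (d : nat)
    (Vs : nat -> {vspace V}) : Prop :=
  (forall i, (i <= d)%N -> \dim (Vs i) = 1%N) /\
  directv (\sum_(i < d.+1) Vs i)%VS /\
  (\sum_(i < d.+1) Vs i)%VS = fullv.

Definition lowers (F : fieldType) (V : vectType F) (d : nat)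
    (X : 'End(V)) (Vs : nat -> {vspace V}) : Prop :=
  (forall i, (1 <= i <= d)%N -> (X @: Vs i)%VS = Vs i.-1) /\
  (X @: Vs 0%N)%VS = 0%VS.

Definition raises (F : fieldType) (V : vectType F) (d : nat)
    (X : 'End(V)) (Vs : nat -> {vspace V}) : Prop :=
  (forall i, (i < d)%N -> (X @: Vs i)%VS = Vs i.+1) /\
  (X @: Vs d)%VS = 0%VS.

Definition LR_pair (F : fieldType) (V : vectType F) (d : nat)
    (A B : 'End(V)) : Prop :=
  exists Vs : nat -> {vspace V},
    decomposition d Vs /\ lowers d A Vs /\ raises d B Vs.

Definition antiautomorphism (F : fieldType) (V : vectType F)
    (s : 'End(V) -> 'End(V)) : Prop :=
  (forall (a : F) (X Y : 'End(V)), s (a *: X + Y) = a *: s X + s Y) /\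
  bijective s /\
  (forall X Y : 'End(V), s (X \o Y)%VF = (s Y \o s X)%VF).

(* Main.v *)
Require Import Defs.
From HB Require Import structures.
From mathcomp Require Import all_boot all_order all_algebra.
From mathcomp Require Import ring zify.
Set Implicit Arguments. Unset Strict Implicit. Unset Printing Implicit Defensive.
Import GRing.Theory.
Local Open Scope ring_scope.

Import passmx.
Section LR.
Variables (F : fieldType) (V : vectType F) (d : nat) (A B : 'End(V)) (Vs : nat -> {vspace V}).
Hypotheses (hdim : \dim {:V} = d.+1) (hdec : decomposition d Vs)
  (hlow : lowers d A Vs) (hrai : raises d B Vs).

Lemma dim1_line (U : {vspace V}) : \dim U = 1%N -> U = <[vpick U]>%VS /\ vpick U != 0.
Proof.
move=> hU.
have nz : vpick U != 0 by rewrite vpick0 -dimv_eq0 hU.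
split=> //; apply/eqP; rewrite eq_sym eqEdim hU dim_vline nz andbT.
by rewrite -memvE memv_pick.
Qed.

Definition vd := vpick (Vs d).
Definition v (m : nat) := iter (d - m) A vd.

Lemma vline m : (m <= d)%N -> Vs m = <[v m]>%VS /\ v m != 0.
Proof.
have [h1 h2] := dim1_line (proj1 hdec d (leqnn d)).
move=> hm; have -> : m = (d - (d - m))%N by rewrite subKn.
elim: (d - m)%N (leq_subr m d) => [|k IH] hk.
  by rewrite subn0 /v subnn /=.
have [IH1 IH2] := IH (ltnW hk).
have e1 : (d - k.+1 = (d - k).-1)%N by rewrite subnS.
have hv : v (d - k.+1) = A (v (d - k)).
  by rewrite /v !subKn ?leq_subr ?(ltnW hk).
have hVs : Vs (d - k.+1) = <[v (d - k.+1)]>%VS.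
  rewrite hv -limg_line -IH1 e1 (proj1 hlow) //.
  by rewrite subn_gt0 hk leq_subr.
split=> //.
move: (dim_vline (v (d - k.+1))); rewrite -hVs (proj1 hdec) ?leq_subr //.
by case: (_ != 0).
Qed.

Lemma line0 (x : V) : <[x]>%VS = 0%VS -> x = 0.
Proof. by move=> h; apply/eqP; rewrite -memv0 -h memv_line. Qed.

Lemma Av0 : A (v 0) = 0.
Proof. by apply: line0; rewrite -limg_line -(proj1 (vline (leq0n d))) (proj2 hlow). Qed.

Lemma Bvd : B (v d) = 0.
Proof. by apply: line0; rewrite -limg_line -(proj1 (vline (leqnn d))) (proj2 hrai). Qed.

Lemma Avm m : (1 <= m <= d)%N -> A (v m) = v m.-1.
Proof.
case/andP=> h1 h2; rewrite /v; have ->: (d - m.-1 = (d - m).+1)%N by lia.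
by [].
Qed.

Lemma hexb m : exists k, (m < d)%N -> B (v m) = k *: v m.+1.
Proof.
case: (ltnP m d) => hm; last by exists 0.
have : B (v m) \in <[v m.+1]>%VS.
  by rewrite -(proj1 (vline hm)) -(proj1 hrai m hm) (proj1 (vline (ltnW hm))) limg_line memv_line.
by case/vlineP=> k hk; exists k.
Qed.

Lemma hexb' m : exists k : F, (m < d)%N ==> (B (v m) == k *: v m.+1).
Proof. by have [k hk] := hexb m; exists k; apply/implyP=> /hk ->. Qed.

Definition b m : F := xchoose (hexb' m).

Lemma Bvm m : (m < d)%N -> B (v m) = b m *: v m.+1.
Proof. by move=> hm; have /implyP/(_ hm)/eqP := xchooseP (hexb' m). Qed.

Lemma b_neq0 m : (m < d)%N -> b m != 0.
Proof.
move=> hm; apply/eqP=> h0.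
have := proj2 (vline hm).
have : <[B (v m)]>%VS = <[v m.+1]>%VS.
  by rewrite -limg_line -(proj1 (vline (ltnW hm))) (proj1 hrai m hm) (proj1 (vline hm)).
by rewrite Bvm // h0 scale0r => /esym/line0 ->; rewrite eqxx.
Qed.

Lemma iterA k m : (m <= d)%N -> iter k A (v m) = if (k <= m)%N then v (m - k) else 0.
Proof.
move=> hm; elim: k => [|k IH]; first by rewrite subn0.
rewrite iterS IH.
case: (ltngtP k m) => h.
- rewrite Avm; last by apply/andP; split; lia.
  by congr v; lia.
- by rewrite raddf0.
- by rewrite h subnn Av0.
Qed.

Lemma iterB0 k : iter k B 0 = 0.
Proof. by elim: k => //= k ->; rewrite raddf0. Qed.

Lemma iterB k m : (m + k <= d)%N ->
  iter k B (v m) = (\prod_(m <= l < m + k) b l) *: v (m + k).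
Proof.
elim: k => [|k IH] hk; first by rewrite addn0 big_geq // scale1r.
rewrite iterS IH; last by lia.
rewrite linearZ /= Bvm; last by lia.
rewrite scalerA addnS big_nat_recr /=; last by lia.
by [].
Qed.

Definition gam k := \prod_(0 <= l < k) b l.

Lemma gam_neq0 k : (k <= d)%N -> gam k != 0.
Proof.
elim: k => [|k IH] hk; first by rewrite /gam big_geq // oner_neq0.
by rewrite /gam big_nat_recr //= mulf_neq0 ?IH ?b_neq0 // ltnW.
Qed.

Lemma gamS k : gam k.+1 = gam k * b k.
Proof. by rewrite /gam big_nat_recr. Qed.

Lemma iterBd0 : iter d B (v 0) = gam d *: v d.
Proof. by rewrite iterB // add0n. Qed.

Lemma iterBd m : (1 <= m <= d)%N -> iter d B (v m) = 0.
Proof.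
case/andP=> h1 h2.
have -> : d = (m.-1 + (d - m).+1)%N by lia.
rewrite iterD iterS iterB ?subnKC // linearZ /= Bvd scaler0.
exact: iterB0.
Qed.

Local Notation n := (\dim {:V}).

Definition e : n.-tuple V := [tuple v i | i < n].

Lemma e_nth (i : 'I_n) : e`_i = v i.
Proof. by rewrite nth_mktuple. Qed.

Lemma e_basis : basis_of fullv e.
Proof.
rewrite basisEdim size_tuple leqnn andbT.
suff hs : (\sum_(i < d.+1) Vs i <= <<e>>)%VS by rewrite (proj2 (proj2 hdec)) in hs.
apply/subv_sumP => i _; rewrite (proj1 (vline _)); last by rewrite -ltnS.
rewrite -memvE; apply: memv_span.
have hi : (i < n)%N by rewrite hdim.
by rewrite -(e_nth (Ordinal hi)) mem_nth // size_tuple.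
Qed.

Lemma coord_e (k : nat) (j : 'I_n) : (k < n)%N -> coord e j (v k) = (k == j)%:R.
Proof.
move=> hk; rewrite -(e_nth (Ordinal hk)) coord_free //.
exact: basis_free e_basis.
Qed.

Lemma ltn_n k : (k < d.+1)%N -> (k < n)%N.
Proof. by rewrite hdim. Qed.

Lemma ord_le (i : 'I_n) : (i <= d)%N.
Proof. by rewrite -ltnS -hdim. Qed.

Lemma mxofE X (i j : 'I_n) : passmx.mxof e e X i j = coord e j (X (v i)).
Proof. by rewrite !mxE /= passmx.vecof_delta e_nth. Qed.

Lemma mxA (a c : 'I_n) : coord e c (A (v a)) = (val a == (val c).+1)%:R.
Proof.
case: a => [[|a'] ha] /=.
  by rewrite Av0 raddf0.
rewrite (Avm (m := a'.+1)) /=; last by rewrite -ltnS -hdim.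
by rewrite coord_e ?eqSS // ltnW.
Qed.

Lemma mxB (a c : 'I_n) : coord e c (B (v a)) = b a * ((val a).+1 == val c)%:R.
Proof.
case: (ltnP a d) => ha.
  by rewrite Bvm // linearZ /= coord_e // ltn_n.
have had : val a = d by apply/eqP; rewrite eqn_leq ha ord_le.
have hc := ord_le c.
have -> : v a = v d by rewrite -had.
have -> : ((val a).+1 == val c) = false.
  apply/negbTE/eqP => /= hc'; move: had hc => /= had hc; lia.
by rewrite Bvd raddf0 mulr0.
Qed.

Definition P (M : 'M[F]_n) : 'M[F]_n := \matrix_(i, j) (gam j / gam i * M j i).

Lemma gam_ord (i : 'I_n) : gam i != 0.
Proof. exact: gam_neq0 (ord_le i). Qed.

Lemma Plin k M N : P (k *: M + N) = k *: P M + P N.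
Proof. by apply/matrixP=> i j; rewrite !mxE; ring. Qed.

Lemma PP M : P (P M) = M.
Proof.
apply/matrixP=> i j; rewrite !mxE.
have := gam_ord i; have := gam_ord j; move=> h1 h2; field.
by apply/andP.
Qed.

Lemma Pmul M N : P (M *m N) = P N *m P M.
Proof.
apply/matrixP=> i j; rewrite !mxE mulr_sumr; apply: eq_bigr => k _.
rewrite !mxE.
have := gam_ord i; have := gam_ord j; have := gam_ord k; move=> h1 h2 h3; field.
by rewrite h1 h3.
Qed.

Local Notation mxof := (passmx.mxof e e).
Local Notation hommx := (passmx.hommx e e).

Lemma PA : P (mxof A) = mxof B.
Proof.
apply/matrixP => a c; rewrite /P mxE !mxofE mxA mxB.
case: a => a ha; case: c => c hc /=.
case: (eqVneq c a.+1) => h.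
  subst c; rewrite gamS; move: ha; rewrite hdim => ha.
  have hg : gam a != 0 by apply: gam_neq0; lia.
  by field.
by rewrite !mulr0.
Qed.

Lemma PB : P (mxof B) = mxof A.
Proof.
apply/matrixP => a c; rewrite /P mxE !mxofE mxA mxB.
case: a => a ha; case: c => c hc /=.
case: (eqVneq a c.+1) => h.
  subst a; rewrite gamS.
  move: ha; rewrite hdim => ha.
  have hg : gam c != 0 by apply: gam_neq0; lia.
  have hb : b c != 0 by apply: b_neq0; lia.
  by field; rewrite hg hb.
by rewrite !mulr0.
Qed.

Definition s (X : 'End(V)) : 'End(V) := hommx (P (mxof X)).

Lemma sK X : s (s X) = X.
Proof.
by rewrite /s (passmx.hommxK e_basis e_basis) PP (passmx.mxofK e_basis e_basis).
Qed.

Lemma s_comp X Y : s (X \o Y)%VF = (s Y \o s X)%VF.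
Proof.
by rewrite /s (passmx.mxof_comp e e e_basis) Pmul
  (passmx.hommx_mul e_basis e_basis e_basis).
Qed.

Lemma s_lin (a : F) X Y : s (a *: X + Y) = a *: s X + s Y.
Proof. by rewrite /s passmx.mxof_linear Plin passmx.hommx_linear. Qed.

Lemma sA : s A = B.
Proof. by rewrite /s PA (passmx.mxofK e_basis e_basis). Qed.

Lemma sB : s B = A.
Proof. by rewrite /s PB (passmx.mxofK e_basis e_basis). Qed.

Lemma s_anti : antiautomorphism s.
Proof.
split; first exact: s_lin.
split; last exact: s_comp.
by exists s; move=> X; rewrite sK.
Qed.

Definition pw (X : 'End(V)) k : 'End(V) := iter k (fun Y => (X \o Y)%VF) \1%VF.

Lemma pwE X k x : pw X k x = iter k X x.
Proof. by elim: k => [|k IH] /=; rewrite ?id_lfunE // comp_lfunE -IH. Qed.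

Lemma pwC X k : (pw X k \o X = X \o pw X k)%VF.
Proof.
elim: k => [|k IH] /=; first by rewrite comp_lfun1l comp_lfun1r.
by rewrite -comp_lfunA IH.
Qed.

Definition W (i j : nat) : 'End(V) := (pw A (d - j) \o (pw B d \o pw A i))%VF.

Lemma iterA0 k : iter k A 0 = 0.
Proof. by elim: k => //= k ->; rewrite raddf0. Qed.

Lemma Wv (i j a : nat) : (a <= d)%N -> (j <= d)%N ->
  W i j (v a) = if a == i then gam d *: v j else 0.
Proof.
move=> ha hj; rewrite /W !comp_lfunE (pwE A i) (pwE B d) iterA //.
case: (leqP i a) => hia.
  case: (eqVneq a i) => hai.
    by rewrite hai subnn iterBd0 linearZ /= pwE /v subnn.
  rewrite iterBd ?raddf0 //; apply/andP; split; last by lia.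
  by rewrite subn_gt0 ltn_neqAle eq_sym hai hia.
have -> : (a == i) = false by apply/eqP; lia.
by rewrite iterB0 raddf0.
Qed.

Lemma mxW (i j : 'I_n) : mxof (W i j) = gam d *: delta_mx i j.
Proof.
apply/matrixP => a c; rewrite mxofE Wv ?ord_le // !mxE.
rewrite -[(a == i)]/(val a == val i); case: ifP => hai /=.
  by rewrite linearZ /= coord_e ?ltn_ord // eq_sym.
by rewrite raddf0 mulr0.
Qed.

Lemma decomp X : X = \sum_(i < n) \sum_(j < n) (mxof X i j / gam d) *: W i j.
Proof.
apply: (can_inj (passmx.mxofK e_basis e_basis)) => /=.
rewrite [LHS]matrix_sum_delta linear_sum; apply: eq_bigr => i _.
rewrite linear_sum; apply: eq_bigr => j _.
rewrite linearZ /= mxW scalerA divfK //; exact: gam_neq0.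
Qed.

Lemma anti_formula (u : 'End(V) -> 'End(V)) :
  antiautomorphism u -> u A = B -> u B = A -> forall X,
  u X = \sum_(i < n) \sum_(j < n)
          (mxof X i j / gam d) *: ((pw B i \o pw A d) \o pw B (d - j))%VF.
Proof.
move=> [hlin [[w hw1 hw2] hc]] uA uB X.
have u0 : u 0 = 0.
  have := hlin 1 0 0; rewrite !scale1r !addr0 => h.
  by apply: (addrI (u 0)); rewrite addr0 -h.
have uD : {morph u : x y / x + y}.
  by move=> x y; have := hlin 1 x y; rewrite !scale1r.
have uZ k x : u (k *: x) = k *: u x by rewrite -[k *: x]addr0 hlin u0 addr0.
have u1 : u \1%VF = \1%VF.
  by rewrite -[RHS]hw2 -[w _]comp_lfun1r hc hw2 comp_lfun1r.
have upw Z k : u (pw Z k) = pw (u Z) k.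
  elim: k => [|k IH] //=.
  by rewrite hc IH pwC.
rewrite {1}(decomp X) (big_morph u uD u0); apply: eq_bigr => i _.
rewrite (big_morph u uD u0); apply: eq_bigr => j _.
by rewrite uZ /W !hc !upw uA uB.
Qed.

End LR.

Theorem proposition6p1 (F : fieldType) (V : vectType F) (d : nat)
    (hdim : \dim {:V} = d.+1) (A B : 'End(V)) (hAB : LR_pair d A B) :
  exists s : 'End(V) -> 'End(V),
    [/\ antiautomorphism s, s A = B, s B = A,
        (forall t : 'End(V) -> 'End(V),
            antiautomorphism t -> t A = B -> t B = A -> forall X, t X = s X)
      & forall X : 'End(V), s (s X) = X].
Proof.
case: hAB => Vs [hdec [hlow hrai]].
exists (s hdec hlow hrai); split.
- exact: s_anti.
- exact: sA.
- exact: sB.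
- move=> t ht tA tB X.
  rewrite (anti_formula hdim hdec hlow hrai ht tA tB).
  by rewrite (anti_formula hdim hdec hlow hrai (s_anti hdim hdec hlow hrai) (sA _ _ _ _) (sB _ _ _ _)).
- exact: sK.
Qed.
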